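(* Let $b,c_1,c_2$ be positive integers and let $\alpha/\beta$ be the right lobster $\mathcal{L}^{c_1,c_2}_b$, with $c_1$, $b$, $c_2$ cells in the top, middle and bottom rows respectively. Then $$\mathrm{inv}(S^{\mathrm{col}}_{\alpha/\beta})=c_1\bigl(b+\min\{c_1,c_2\}\bigr)+\binom{b}{2}+\binom{\max\{c_1,c_2\}}{2}.$$
   Context: Rows are numbered from the bottom. The right lobster $\mathcal{L}^{c_1,c_2}_b$ is the skew diagram $\alpha/\beta$ with $\alpha=(b+1+c_2,b+1,b+1+c_1)$, $\beta=(b+1,1,b+1)$: a bottom row of $c_2$ cells in columns $b+2,\ldots,b+1+c_2$, a middle row of $b$ cells in columns $2,\ldots,b+1$, and a top row of $c_1$ cells in columns $b+2,\ldots,b+1+c_1$. $S^{\mathrm{col}}_{\alpha/\beta}$ is the filling of $\alpha/\beta$ with $1,\ldots,b+c_1+c_2$ consecutively along columns bottom to top, from the leftmost column rightward. For a tableau $T$, $\mathrm{inv}(T)$ is the number of inversions (pairs of positions $p<q$ with the $p$th letter larger than the $q$th) of its reading word, obtained by reading each row right to left, starting from the top row and moving down. *)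

(* Defs.v *)
From mathcomp Require Import all_boot.
Set Implicit Arguments. Unset Strict Implicit. Unset Printing Implicit Defensive.

(* A skew diagram alpha/beta is given by two sequences of row lengths,
   rows numbered from the bottom (row r = index r of the sequences, 0-based),
   columns numbered from 1.  Row r consists of the cells (r, c) with
   beta_r < c <= alpha_r. *)
Definition row_cells (al be : seq nat) (r : nat) : seq (nat * nat) :=
  [seq (r, c) | c <- iota (nth 0 be r).+1 (nth 0 al r - nth 0 be r)].

Definition skew_cells (al be : seq nat) : seq (nat * nat) :=
  flatten [seq row_cells al be r | r <- iota 0 (size al)].

(* S^col: fill consecutively with 1, 2, ... along columns, bottom to top,
   from the leftmost column rightward.  The entry of cell x is 1 + the number
   of cells preceding x in this order. *)
Definition Scol (al be : seq nat) (x : nat * nat) : nat :=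
  (count (fun y : nat * nat => (y.2 < x.2) || ((y.2 == x.2) && (y.1 < x.1)))
     (skew_cells al be)).+1.

Definition reading_word (al be : seq nat) (T : nat * nat -> nat) : seq nat :=
  flatten [seq [seq T x | x <- rev (row_cells al be r)]
          | r <- rev (iota 0 (size al))].

Definition inversions (w : seq nat) : nat :=
  \sum_(p < size w) \sum_(q < size w | p < q) (nth 0 w q < nth 0 w p).

Definition lobster_alpha (b c1 c2 : nat) : seq nat := [:: b + 1 + c2; b + 1; b + 1 + c1].
Definition lobster_beta (b : nat) : seq nat := [:: b + 1; 1; b + 1].

(* Main.v *)
Require Import Defs.
From mathcomp Require Import all_boot.
From mathcomp Require Import zify.

Lemma cnt_sum w x : \sum_(q < size w) (nth 0 w q < x) = count (fun y => y < x) w.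
Proof. elim: w => [|y w IH]; first by rewrite big_ord0. by rewrite /= big_ord_recl /= IH. Qed.

Lemma inv_cons x w : inversions (x :: w) = count (fun y => y < x) w + inversions w.
Proof.
rewrite /inversions /= big_ord_recl /= big_mkcond big_ord_recl /= add0n -cnt_sum.
congr (_ + _); apply: eq_bigr => i _.
rewrite big_mkcond big_ord_recl /= add0n [in RHS]big_mkcond; apply: eq_bigr => j _.
by rewrite /bump /= !add1n ltnS.
Qed.

Lemma inv_cat s1 s2 : inversions (s1 ++ s2) = inversions s1 + inversions s2 + \sum_(x <- s1) count (fun y => y < x) s2.
Proof.
elim: s1 => [|x s1 IH] /=; first by rewrite big_nil /inversions big_ord0 addn0.
rewrite !inv_cons IH big_cons count_cat; lia.
Qed.

Lemma inv_inc (f : nat -> nat) n : (forall i j, i < j < n -> f i < f j) ->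
  inversions (map f (rev (iota 0 n))) = 'C(n, 2).
Proof.
elim: n => [|n IH] H; first by rewrite /inversions big_ord0.
rewrite -addn1 iotaD rev_cat /= inv_cons IH; last by move=> i j Hij; apply: H; lia.
rewrite count_map count_rev (@eq_in_count _ _ predT); last first.
  by move=> i; rewrite mem_iota => Hi; apply: H; lia.
by rewrite count_predT size_iota addn1 binS bin1 addnC.
Qed.

Lemma cnt_iota (P : pred nat) a n k (f : bool) :
  (forall c, P c = (c < k) || ((c == k) && f)) -> count P (iota a n) = minn n (k + f - a).
Proof.
move=> HP; elim: n a => [|n IH] a /=; first by rewrite min0n.
rewrite IH HP; clear IH HP; case: f; case: (ltngtP a k) => H /=; lia.
Qed.

Section L.
Variables b c1 c2 : nat.
Let al := lobster_alpha b c1 c2.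
Let be := lobster_beta b.

Lemma Scol_eq r k : Scol al be (r, k) =
  (minn c2 (k + (0 < r) - (b+2)) + minn b (k + (1 < r) - 2) + minn c1 (k + (2 < r) - (b+2))).+1.
Proof.
rewrite /Scol /skew_cells /= !count_cat !count_map /= addn0.
rewrite (@cnt_iota _ _ _ k (0 < r)) // (@cnt_iota _ _ _ k (1 < r)) // (@cnt_iota _ _ _ k (2 < r)) //.
rewrite !addKn addnK; lia.
Qed.

Lemma row_map r a n g : (forall i, i < n -> Scol al be (r, a + i) = g i) ->
  [seq Scol al be x | x <- rev [seq (r, c) | c <- iota a n]] = map g (rev (iota 0 n)).
Proof.
move=> H; rewrite -(addn0 a) iotaDl -!map_rev -!map_comp.
by apply/eq_in_map => i; rewrite mem_rev mem_iota /= => Hi; rewrite H //; lia.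
Qed.

Lemma word_eq : reading_word al be (Scol al be) =
  map (fun i => b + i.+1 + minn c2 i.+1) (rev (iota 0 c1)) ++
  map (fun i => i.+1) (rev (iota 0 b)) ++
  map (fun j => b + j.+1 + minn c1 j) (rev (iota 0 c2)).
Proof.
rewrite /reading_word /= /row_cells /= cats0 !addKn addnK.
rewrite (@row_map 2 _ _ (fun i => b + i.+1 + minn c2 i.+1)) ?(@row_map 0 _ _ (fun j => b + j.+1 + minn c1 j))
  ?(@row_map 1 _ _ (fun i => i.+1)) //; move=> i Hi; rewrite Scol_eq /=; lia.
Qed.
End L.

Lemma sum_mri (f G : nat -> nat) n :
  \sum_(x <- map f (rev (iota 0 n))) G x = \sum_(0 <= i < n) G (f i).
Proof. by rewrite big_map big_rev /index_iota subn0. Qed.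

Lemma cnt_map (f : nat -> nat) n x :
  count (fun y => y < x) (map f (rev (iota 0 n))) = count (fun j => f j < x) (iota 0 n).
Proof. by rewrite count_map count_rev. Qed.

Lemma S_eq c n : \sum_(0 <= i < n) minn i.+1 c + 'C(n, 2) + 'C(c, 2) = n * minn n c + 'C(maxn n c, 2).
Proof.
elim: n => [|n IH]; first by rewrite big_geq // min0n max0n.
rewrite big_nat_recr //= binS bin1.
case: (leqP n.+1 c) => H.
  have E1 : maxn n.+1 c = c by lia.
  have E2 : maxn n c = c by lia.
  have E3 : minn n.+1 c = n.+1 by lia.
  have E4 : minn n c = n by lia.
  rewrite ?E1 ?E3 ?binS ?bin1; rewrite E2 E4 in IH; nia.
have E1 : maxn n.+1 c = n.+1 by lia.
have E2 : maxn n c = n by lia.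
have E3 : minn n.+1 c = c by lia.
have E4 : minn n c = c by lia.
rewrite ?E1 ?E3 ?binS ?bin1; rewrite E2 E4 in IH; nia.
Qed.

Theorem lemma5p7 (b c1 c2 : nat) :
  0 < b -> 0 < c1 -> 0 < c2 ->
  inversions (reading_word (lobster_alpha b c1 c2) (lobster_beta b)
                (Scol (lobster_alpha b c1 c2) (lobster_beta b)))
  = c1 * (b + minn c1 c2) + 'C(b, 2) + 'C(maxn c1 c2, 2).
Proof.
move=> hb h1 h2.
rewrite word_eq !inv_cat !inv_inc; try (move=> i j Hij; lia).
rewrite !sum_mri.
rewrite (@eq_big_nat _ _ _ 0 b _ (fun _ => 0)); last first.
  move=> i Hi; rewrite cnt_map (@eq_in_count _ _ pred0) ?count_pred0 //.
  move=> j _ /=; apply/negbTE; rewrite -leqNgt; lia.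
rewrite (@eq_big_nat _ _ _ 0 c1 _ (fun i => b + minn i.+1 c2)); last first.
  move=> i Hi; rewrite count_cat !cnt_map.
  rewrite (@eq_in_count _ _ predT); last by move=> j; rewrite mem_iota /= => Hj; lia.
  rewrite count_predT size_iota; congr (_ + _).
  case: (leqP i.+1 c2) => H.
    rewrite (@eq_in_count _ _ (fun j => j < i.+1)); last first.
      move=> j; rewrite mem_iota /= => Hj; apply/idP/idP; lia.
    rewrite (@cnt_iota _ 0 c2 i.+1 false) //; first lia.
    by move=> c; rewrite andbF orbF.
  rewrite (@eq_in_count _ _ predT); last by move=> j; rewrite mem_iota /= => Hj; lia.
  rewrite count_predT size_iota; lia.
rewrite sum_nat_const_nat big_split /= sum_nat_const_nat !subn0 muln0 addn0.
have := S_eq c2 c1.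
rewrite mulnDr.
move: (\sum_(0 <= i < c1) minn i.+1 c2) (c1 * minn c1 c2) => S M.
lia.
Qed.
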